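(* Let $\lambda\in\mathbb{C}^*$, $\alpha\in\mathbb{C}$, $t\in\{1,-1\}$, and let $\mathcal{M}_t(\lambda,\alpha)$ be the $\mathcal{T}$-module described in the context. Let $\Upsilon_t=\partial^2\mathbb{C}[\partial^2]\oplus\partial\mathbb{C}[\partial^2]\subseteq\mathcal{M}_t(\lambda,0)$. Then: (1) $\mathcal{M}_t(\lambda,\alpha)$ is simple if and only if $\alpha\neq0$. Furthermore, $\Upsilon_t$ is the unique nonzero proper submodule of $\mathcal{M}_t(\lambda,0)$, and $\mathcal{M}_t(\lambda,0)/\Upsilon_t$ is a one-dimensional trivial $\mathcal{T}$-module. (2) $\Upsilon_1\cong\Pi(\mathcal{M}_{-1}(\lambda,\frac12))$ and $\Upsilon_{-1}\cong\Pi(\mathcal{M}_1(\lambda,\frac12))$, and these are simple $\mathcal{T}$-modules.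
   Context: The twisted $N=2$ superconformal algebra $\mathcal{T}$ is the Lie superalgebra over $\mathbb{C}$ with basis $\{L_m, I_r, G_p\mid m\in\mathbb{Z}, r\in\frac12+\mathbb{Z}, p\in\frac12\mathbb{Z}\}$, even part spanned by the $L_m,I_r$, odd part spanned by the $G_p$, and with the only nonzero brackets $[L_m,L_n]=(m-n)L_{m+n}$, $[L_m,I_r]=-rI_{m+r}$, $[L_m,G_p]=(\frac m2-p)G_{m+p}$, $[I_r,G_p]=G_{r+p}$, and $[G_p,G_q]=(-1)^{2p}2L_{p+q}$ if $p+q\in\mathbb{Z}$, $[G_p,G_q]=(-1)^{2p+1}(p-q)I_{p+q}$ if $p+q\in\frac12+\mathbb{Z}$. Modules are $\mathbb{Z}_2$-graded (super)modules; $\Pi$ denotes the parity-change functor (swapping even and odd parts). For $\lambda\in\mathbb{C}^*,\alpha\in\mathbb{C},t=\pm1$, $\mathcal{M}_t(\lambda,\alpha)$ is the space $\mathbb{C}[\partial^2]\oplus\partial\mathbb{C}[\partial^2]$ ($\partial$ a formal variable) with even part $\mathbb{C}[\partial^2]$, odd part $\partial\mathbb{C}[\partial^2]$, and action ($m\in\mathbb{Z}$, $r\in\frac12+\mathbb{Z}$, $p\in\frac12\mathbb{Z}$): $L_mf(\partial^2)=\lambda^m(\partial^2+m\alpha)f(\partial^2+m)$, $L_m\partial f(\partial^2)=\lambda^m(\partial^2+m(\alpha+\frac12))\partial f(\partial^2+m)$, $I_rf(\partial^2)=-2t^{2r}\lambda^{r}\alpha f(\partial^2+r)$, $I_r\partial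 f(\partial^2)=t^{2r}\lambda^{r}(1-2\alpha)\partial f(\partial^2+r)$, $G_pf(\partial^2)=t^{2p}\lambda^p\partial f(\partial^2+p)$, $G_p\partial f(\partial^2)=(-t)^{2p}\lambda^p(\partial^2+2p\alpha)f(\partial^2+p)$. For $p\in\frac12\mathbb{Z}$, $\lambda^p$ means $(\lambda^{1/2})^{2p}$ for a fixed square root $\lambda^{1/2}$. *)

(* Defs.v *)
(* Complex numbers are modelled as R[i] (= complex R) for
   R : realType (so R[i] is the field of complex numbers); the generic
   definitions below are stated for an arbitrary field C. *)
From HB Require Import structures.
From mathcomp Require Import all_boot all_order all_algebra.
From mathcomp Require Export complex.
From mathcomp Require Export reals.
Set Implicit Arguments. Unset Strict Implicit. Unset Printing Implicit Defensive.
Import Order.TTheory GRing.Theory Num.Theory.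
Local Open Scope ring_scope.

(* Basis of the twisted N=2 superconformal algebra T:
   TL m  = L_m          (m : int),
   TI k  = I_{k/2}      (k : int, must be odd; see validT),
   TG k  = G_{k/2}      (k : int, arbitrary).  *)
Inductive Tbasis := TL of int | TI of int | TG of int.

Definition validT (b : Tbasis) : bool :=
  match b with TI k => ~~ (2 %| k)%Z | _ => true end.

Section Module.
Variable C : fieldType.

(* The carrier C[d^2] (+) d C[d^2]: a pair (f, g) of polynomials in one
   variable X represents f(d^2) + d g(d^2).  First component = even part,
   second component = odd part. *)
Definition Mcarrier := ({poly C} * {poly C})%type.

Definition shiftp (f : {poly C}) (c : C) : {poly C} := f \Po ('X + c%:P).

Definition halfz (k : int) : C := k%:~R / 2.

(* Action of basis elements on M_t(lambda, alpha), where s is the fixed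
   square root lambda^{1/2} of lambda (so lambda^p = s^(2p)). *)
Definition Mact (t s alpha : C) (b : Tbasis) (v : Mcarrier) : Mcarrier :=
  let: (f, g) := v in
  match b with
  | TL m =>
      ((s ^ (2 * m)) *: (('X + (m%:~R * alpha)%:P) * shiftp f m%:~R),
       (s ^ (2 * m)) *: (('X + (m%:~R * (alpha + 2^-1))%:P) * shiftp g m%:~R))
  | TI k =>
      ((- 2 * t ^ k * s ^ k * alpha) *: shiftp f (halfz k),
       (t ^ k * s ^ k * (1 - 2 * alpha)) *: shiftp g (halfz k))
  | TG k =>
      (((- t) ^ k * s ^ k) *: (('X + (k%:~R * alpha)%:P) * shiftp g (halfz k)),
       (t ^ k * s ^ k) *: shiftp f (halfz k))
  end.

(* A (super)submodule of a module with carrier Mcarrier and action act: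
   a Z2-graded subspace (i.e. W = W_even (+) W_odd) stable under the action
   of every basis element of T. *)
Definition is_submodule (act : Tbasis -> Mcarrier -> Mcarrier)
    (W : Mcarrier -> Prop) : Prop :=
  [/\ W 0,
      (forall u v, W u -> W v -> W (u + v)),
      (forall (c : C) v, W v -> W (c *: v)),
      (forall f g, W (f, g) -> W (f, 0))
    & (forall b v, validT b -> W v -> W (act b v))].

Definition nonzero_subm (W : Mcarrier -> Prop) : Prop := exists v, W v /\ v <> 0.
Definition proper_subm (W : Mcarrier -> Prop) : Prop := exists v, ~ W v.

Definition simple_mod (act : Tbasis -> Mcarrier -> Mcarrier) : Prop :=
  forall W, is_submodule act W -> nonzero_subm W -> forall v, W v.

(* Upsilon = d^2 C[d^2] (+) d C[d^2]. *)
Definition Upsilon (v : Mcarrier) : Prop := 'X %| v.1.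

Definition simple_submod (act : Tbasis -> Mcarrier -> Mcarrier)
    (U : Mcarrier -> Prop) : Prop :=
  forall W, is_submodule act W -> nonzero_subm W -> (forall v, W v -> U v) ->
    forall v, U v -> W v.

Definition quotient_1dim_trivial (act : Tbasis -> Mcarrier -> Mcarrier)
    (U : Mcarrier -> Prop) : Prop :=
  (exists v, ~ U v /\ forall w, exists c : C, U (w - c *: v)) /\
  (forall b v, validT b -> U (act b v)).

(* U (a submodule of the module with action act2) is isomorphic to Pi(M),
   where M has action act1: there is an injective linear map phi from the
   carrier of M onto U, commuting with the action, and mapping the even part
   of M to the odd part of U and the odd part of M to the even part of U
   (so that it is an even isomorphism Pi(M) -> U).  Pi(M) is M with the
   parity swapped and the same action. *)
Definition iso_Pi_sub (act1 act2 : Tbasis -> Mcarrier -> Mcarrier)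
    (U : Mcarrier -> Prop) : Prop :=
  exists phi : Mcarrier -> Mcarrier,
    [/\ (forall (c : C) u v, phi (c *: u + v) = c *: phi u + phi v) /\
        injective phi,
        (forall w, U w <-> exists v, phi v = w),
        (forall f, (phi (f, 0)).1 = 0),
        (forall g, (phi (0, g)).2 = 0)
      & (forall b v, validT b -> phi (act1 b v) = act2 b (phi v))].

End Module.

(* Main.v *)
Require Import Defs.
From HB Require Import structures.
From mathcomp Require Import all_boot all_order all_algebra.
From mathcomp Require Import complex reals.
Import Order.TTheory GRing.Theory Num.Theory.
Local Open Scope ring_scope.
Local Open Scope complex_scope.
From mathcomp Require Import ring.
Set Implicit Arguments. Unset Strict Implicit. Unset Printing Implicit Defensive.
Local Close Scope complex_scope.

Section Gen.
Variable C : numFieldType.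
Implicit Types f g h : {poly C}.

Lemma shiftp0 f : shiftp f 0 = f.
Proof. by rewrite /shiftp addr0 comp_polyXr. Qed.

Lemma halfz0 : halfz C 0 = 0.
Proof. by rewrite /halfz mul0r. Qed.

Lemma size_diff_lt f c : f != 0 -> (size (shiftp f c - f)%R < size f)%N.
Proof.
move=> f0.
have Hs : size (shiftp f c) = size f by rewrite /shiftp size_comp_poly2 // size_XaddC.
have Hl : lead_coef (shiftp f c) = lead_coef f.
  by rewrite /shiftp lead_coef_comp ?size_XaddC // lead_coefXaddC expr1n mulr1.
have sf : (0 < size f)%N by rewrite size_poly_gt0.
have : (size (shiftp f c - f)%R <= (size f).-1)%N.
  apply/leq_sizeP => j hj; rewrite coefB.
  case: (ltngtP j (size f).-1) => hj'.
  - by move: hj; rewrite leqNgt hj'.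
  - have hj2 : (size f <= j)%N by rewrite -(prednK sf).
    by rewrite !nth_default ?subr0 // Hs.
  - by rewrite hj'; move: Hl; rewrite /lead_coef Hs => ->; rewrite subrr.
by move=> h; apply: (leq_ltn_trans h); rewrite prednK.
Qed.

Lemma shift_fixed_const f c : c != 0 -> shiftp f c = f -> f = (f.[0])%:P.
Proof.
move=> c0 hf.
have hn : forall n : nat, f.[n%:R * c] = f.[0].
  elim=> [|n IH]; first by rewrite mul0r.
  by rewrite -IH -{2}hf /shiftp horner_comp !hornerE mulrSr mulrDl mul1r.
apply/eqP; rewrite -subr_eq0; apply/negPn/negP => nz.
set g := f - _ in nz.
have := @max_poly_roots _ g [seq i%:R * c | i <- iota 0 (size g)] nz.
rewrite size_map size_iota ltnn => H; suff: false by []; apply: H.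
- apply/allP => x /mapP [i _ ->]; by rewrite /root /g !hornerE hn subrr.
- rewrite map_inj_uniq ?iota_uniq // => i j /(mulIf c0) /eqP.
  by rewrite eqr_nat => /eqP.
Qed.

Lemma shift_closed_all (P : {poly C} -> Prop) (c : C) : c != 0 ->
  (forall f g, P f -> P g -> P (f + g)) -> (forall a f, P f -> P (a *: f)) ->
  (forall f, P f -> P ('X * f)) -> (forall f, P f -> P (shiftp f c)) ->
  forall f, f != 0 -> P f -> forall h, P h.
Proof.
move=> c0 PD PZ PX PS f f0 Pf.
have P1 : P 1.
  elim: {f}(size f) {-2}f (leqnn (size f)) f0 Pf => [|n IH] f hs f0 Pf.
    by move: f0; rewrite -size_poly_eq0; move: hs; rewrite leqn0 => ->.
  have Pd : P (shiftp f c - f) by apply: PD; [exact: PS| rewrite -scaleN1r; exact: PZ].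
  case: (eqVneq (shiftp f c - f) 0) => [/eqP|] hd.
    rewrite subr_eq0 in hd; have hf := shift_fixed_const c0 (eqP hd).
    have f00 : f.[0] != 0 by apply: contra f0 => /eqP e; rewrite hf e.
    move: f00 Pf; set a := f.[0] => a0 Pf.
    by have := PZ a^-1 _ Pf; rewrite hf -mul_polyC -polyCM mulVf.
  apply: (IH _ _ hd Pd); have := size_diff_lt c f0; move=> h; by rewrite -ltnS (leq_trans h).
elim/poly_ind => [|p a Pp].
  by rewrite -(scale0r 1); exact: PZ.
by apply: PD; [rewrite mulrC; exact: PX | rewrite -alg_polyC; exact: PZ].
Qed.

End Gen.

Section Mod.
Variable C : numFieldType.
Variables t s a : C.
Implicit Types f g h : {poly C}.
Local Notation act := (Mact t s a).

Lemma L0_1 f g : (act (TL 0) (f, g)).1 = 'X * f.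
Proof. by rewrite /= mulr0 expr0z scale1r mul0r addr0 shiftp0. Qed.
Lemma L0_2 f g : (act (TL 0) (f, g)).2 = 'X * g.
Proof. by rewrite /= mulr0 expr0z scale1r mul0r addr0 shiftp0. Qed.
Lemma I1_1 f g : (act (TI 1) (f, g)).1 = (-2 * t * s * a) *: shiftp f (halfz C 1).
Proof. by rewrite /= !expr1z. Qed.
Lemma I1_2 f g : (act (TI 1) (f, g)).2 = (t * s * (1 - 2 * a)) *: shiftp g (halfz C 1).
Proof. by rewrite /= !expr1z. Qed.
Lemma G0_1 f g : (act (TG 0) (f, g)).1 = 'X * g.
Proof. by rewrite /= !expr0z mulr1 scale1r mul0r addr0 halfz0 shiftp0. Qed.
Lemma G0_2 f g : (act (TG 0) (f, g)).2 = f.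
Proof. by rewrite /= !expr0z mulr1 scale1r halfz0 shiftp0. Qed.

Lemma pairD (p q p' q' : {poly C}) : ((p, q) + (p', q') : Mcarrier C) = (p + p', q + q'). Proof. by []. Qed.
Lemma pairZ c (p q : {poly C}) : (c *: (p, q) : Mcarrier C) = (c *: p, c *: q). Proof. by []. Qed.

Lemma dvdX_sub0 h : 'X %| h - (h.[0])%:P.
Proof. by rewrite -[X in X %| _](subr0 'X) -polyC0 -root_factor_theorem /root !hornerE subrr. Qed.

Variable W : Mcarrier C -> Prop.
Hypothesis HW : is_submodule act W.

Lemma W0 : W 0. Proof. by case: HW. Qed.
Lemma WD u v : W u -> W v -> W (u + v). Proof. case: HW => _ H _ _ _; exact: H. Qed.
Lemma WZ c v : W v -> W (c *: v). Proof. case: HW => _ _ H _ _; exact: H. Qed.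
Lemma Wev v : W v -> W (v.1, 0). Proof. case: HW => _ _ _ H _; move: v => [f g]; exact: H. Qed.
Lemma Wact b v : validT b -> W v -> W (act b v). Proof. by case: HW => _ _ _ _ H; apply: H. Qed.
Lemma Wod v : W v -> W (0, v.2).
Proof.
move=> Wv; have := WD Wv (WZ (-1) (Wev Wv)); case: v {Wv} => f g /=.
suff -> : ((f, g) + (-1) *: (f, 0) : Mcarrier C) = (0, g) by [].
by rewrite pairZ pairD scaleN1r addrN scaler0 addr0.
Qed.
Lemma Wpair f g : W (f, 0) -> W (0, g) -> W (f, g).
Proof.
move=> h1 h2; have := WD h1 h2.
suff -> : ((f, 0) + (0, g) : Mcarrier C) = (f, g) by [].
by rewrite pairD addr0 add0r.
Qed.

Lemma even_nonzero : nonzero_subm W -> exists2 f, f != 0 & W (f, 0).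
Proof.
case=> [[f g] [Wv nz]].
case: (eqVneq f 0) => [f0|fn0]; last by exists f => //; exact: (Wev Wv).
subst f; have g0 : g != 0 by apply/eqP => g0; apply: nz; rewrite g0.
exists ('X * g); first by rewrite mulf_eq0 negb_or polyX_eq0.
by have := Wev (@Wact (TG 0) _ isT Wv); rewrite G0_1.
Qed.

Lemma odd_nonzero : nonzero_subm W -> exists2 g, g != 0 & W (0, g).
Proof.
case/even_nonzero => f f0 Wf; exists f => //.
by have := Wod (@Wact (TG 0) _ isT Wf); rewrite G0_2.
Qed.

Lemma even_closed_all : t != 0 -> s != 0 -> a != 0 -> nonzero_subm W -> forall h, W (h, 0).
Proof.
move=> t0 s0 a0 /even_nonzero [f f0 Wf].
have h2 : halfz C 1 != 0 by rewrite /halfz mulf_neq0 ?invr_eq0 ?pnatr_eq0 ?oner_eq0.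
apply: (@shift_closed_all _ (fun h => W (h, 0)) _ h2 _ _ _ _ f f0 Wf).
- move=> p q Wp Wq; have := WD Wp Wq.
  suff -> : ((p, 0) + (q, 0) : Mcarrier C) = (p + q, 0) by [].
  by rewrite pairD addr0.
- move=> c p Wp; have := WZ c Wp.
  suff -> : (c *: (p, 0) : Mcarrier C) = (c *: p, 0) by [].
  by rewrite pairZ scaler0.
- by move=> p Wp; have := Wev (@Wact (TL 0) _ isT Wp); rewrite L0_1.
- move=> p Wp; have := WZ (-2 * t * s * a)^-1 (Wev (@Wact (TI 1) _ isT Wp)).
  rewrite I1_1.
  suff -> : ((-2 * t * s * a)^-1 *: ((-2 * t * s * a) *: shiftp p (halfz C 1), 0) : Mcarrier C)
     = (shiftp p (halfz C 1), 0) by [].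
  rewrite pairZ scaler0 scalerA mulVf ?scale1r //.
  by rewrite !mulf_neq0 ?oppr_eq0 ?pnatr_eq0.
Qed.


Lemma odd_closed_all : a = 0 -> t != 0 -> s != 0 -> nonzero_subm W -> forall h, W (0, h).
Proof.
move=> a0 t0 s0 /odd_nonzero [f f0 Wf].
have h2 : halfz C 1 != 0 by rewrite /halfz mulf_neq0 ?invr_eq0 ?pnatr_eq0 ?oner_eq0.
apply: (@shift_closed_all _ (fun h => W (0, h)) _ h2 _ _ _ _ f f0 Wf).
- move=> p q Wp Wq; have := WD Wp Wq.
  suff -> : ((0, p) + (0, q) : Mcarrier C) = (0, p + q) by [].
  by rewrite pairD addr0.
- move=> c p Wp; have := WZ c Wp.
  suff -> : (c *: (0, p) : Mcarrier C) = (0, c *: p) by [].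
  by rewrite pairZ scaler0.
- by move=> p Wp; have := Wod (@Wact (TL 0) _ isT Wp); rewrite L0_2.
- move=> p Wp; have := WZ (t * s)^-1 (Wod (@Wact (TI 1) _ isT Wp)).
  rewrite I1_2 a0 mulr0 subr0 mulr1.
  suff -> : ((t * s)^-1 *: (0, (t * s) *: shiftp p (halfz C 1)) : Mcarrier C)
     = (0, shiftp p (halfz C 1)) by [].
  by rewrite pairZ scaler0 scalerA mulVf ?scale1r // mulf_neq0.
Qed.

Lemma all_of_nonzero : t != 0 -> s != 0 -> a != 0 -> nonzero_subm W -> forall v, W v.
Proof.
move=> t0 s0 a0 nz [f g]; apply: Wpair; first exact: even_closed_all.
have := Wod (@Wact (TG 0) _ isT (even_closed_all t0 s0 a0 nz g)).
by rewrite G0_2.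
Qed.

Lemma ups_in : a = 0 -> t != 0 -> s != 0 -> nonzero_subm W -> forall v, Upsilon v -> W v.
Proof.
move=> a0 t0 s0 nz [f g] /= hX; apply: Wpair; last exact: odd_closed_all.
have := Wev (@Wact (TG 0) _ isT (odd_closed_all a0 t0 s0 nz (f %/ 'X))).
by rewrite G0_1 mulrC divpK.
Qed.

Lemma W_sub_ups : a = 0 -> t != 0 -> s != 0 -> nonzero_subm W -> proper_subm W ->
  forall v, W v -> Upsilon v.
Proof.
move=> a0 t0 s0 nz [w nWw] [f g] Wv; rewrite /Upsilon /=.
apply/negPn/negP => nX; apply: nWw.
have Wf := Wev Wv; rewrite /= in Wf.
have c0 : f.[0] != 0.
  apply: contra nX => /eqP r0.
  by rewrite -[X in X %| _](subr0 'X) -polyC0 -root_factor_theorem /root r0.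
have Wc : W ((f.[0])%:P, 0).
  have := WD Wf (WZ (-1) (ups_in a0 t0 s0 nz (v := (f - (f.[0])%:P, 0)) (dvdX_sub0 f))).
  by rewrite pairZ pairD scaler0 addr0 scaleN1r opprB addrC subrK.
case: w => h k; apply: Wpair; last exact: odd_closed_all.
have := WD (ups_in a0 t0 s0 nz (v := (h - (h.[0])%:P, 0)) (dvdX_sub0 h)) (WZ (h.[0] / f.[0]) Wc).
by rewrite pairZ pairD scaler0 addr0 -mul_polyC -polyCM divfK // subrK.
Qed.

End Mod.

Lemma ups_img (C : numFieldType) (t s : C) b v : Upsilon (Mact t s 0 b v).
Proof.
rewrite /Upsilon; case: b v => [m|k|k] [f g] /=.
- by rewrite mulr0 addr0 -mul_polyC dvdp_mull // dvdp_mulIl.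
- by rewrite mulr0 scale0r dvdp0.
- by rewrite mulr0 addr0 -mul_polyC dvdp_mull // dvdp_mulIl.
Qed.

Lemma ups_is_sub (C : numFieldType) (t s : C) : is_submodule (Mact t s 0) (@Upsilon C).
Proof.
split; last by move=> b v _ _; exact: ups_img.
all: rewrite /Upsilon.
- exact: dvdp0.
- by move=> [f g] [f' g'] hu hv; rewrite pairD /= (dvdp_add hu hv).
- by move=> c [f g] hv; rewrite pairZ /= -mul_polyC dvdp_mull.
- by [].
Qed.


Section Iso.
Variable C : numFieldType.
Implicit Types f g h : {poly C}.

Lemma negone_odd (k : int) : ~~ (2 %| k)%Z -> (-1 : C) ^ k = -1.
Proof. by rewrite dvdzE dvdn2 negbK => ho; rewrite expN1r -signr_odd ho expr1. Qed.

Lemma half_half : (2^-1 + 2^-1 : C) = 1.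
Proof. by field. Qed.

Lemma two_half : (2 * 2^-1 : C) = 1.
Proof. by field. Qed.

Lemma shiftpX g c : shiftp ('X * g) c = ('X + c%:P) * shiftp g c.
Proof. by rewrite /shiftp comp_polyM comp_polyX. Qed.

Definition phi (v : Mcarrier C) : Mcarrier C := ('X * v.2, v.1).

Lemma iso_gen (t s : C) : (forall k : int, ~~ (2 %| k)%Z -> - (-t) ^ k = t ^ k) ->
  iso_Pi_sub (Mact (-t) s 2^-1) (Mact t s 0) (@Upsilon C).
Proof.
move=> ht; exists phi; split.
- split.
    move=> c [f g] [f' g']; rewrite /phi /=.
    change (('X * (c *: g + g'), c *: f + f') = (c *: ('X * g) + 'X * g', c *: f + f')).
    by rewrite mulrDr scalerAr.
  move=> [f g] [f' g'] [] /(mulfI _) h1 ->.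
  by rewrite h1 // polyX_eq0.
- move=> [f g]; split.
    move=> hX; exists (g, f %/ 'X); rewrite /phi /=.
    by rewrite mulrC divpK.
  by case=> [[f' g']] [<- _]; rewrite /Upsilon /= dvdp_mulIl.
- by move=> f; rewrite /= mulr0.
- by [].
case=> [m|k|k] [f g] vb; rewrite /phi /=.
- rewrite shiftpX half_half mulr1 mulr0 add0r addr0.
  by rewrite -!scalerAr mulrA.
- rewrite two_half subrr !mulr0 !scale0r mulr0 subr0 mulr1.
  congr pair; congr (_ *: _); rewrite -(ht k vb).
  by field.
- rewrite opprK shiftpX mulr0 addr0.
  by rewrite -!scalerAr.
Qed.
End Iso.
Local Open Scope complex_scope.
Theorem theorem2p5 (R : realType) (lambda s alpha t : R[i]) :
  lambda != 0 -> s * s = lambda -> (t = 1 \/ t = -1) ->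
  (* (1) *)
  (simple_mod (Mact t s alpha) <-> alpha != 0) /\
  (is_submodule (Mact t s 0) (@Upsilon R[i]) /\
   nonzero_subm (@Upsilon R[i]) /\ proper_subm (@Upsilon R[i]) /\
   (forall W, is_submodule (Mact t s 0) W -> nonzero_subm W -> proper_subm W ->
      forall v, W v <-> @Upsilon R[i] v) /\
   quotient_1dim_trivial (Mact t s 0) (@Upsilon R[i])) /\
  (* (2) *)
  (iso_Pi_sub (Mact (-1) s (2^-1)) (Mact 1 s 0) (@Upsilon R[i]) /\
   iso_Pi_sub (Mact 1 s (2^-1)) (Mact (-1) s 0) (@Upsilon R[i]) /\
   simple_submod (Mact 1 s 0) (@Upsilon R[i]) /\
   simple_submod (Mact (-1) s 0) (@Upsilon R[i])).
Proof.
move=> l0 hs ht.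
have s0 : s != 0 by apply: contraNneq l0 => s0; rewrite -hs s0 mul0r.
have t0 : t != 0 by case: ht => ->; rewrite ?oppr_eq0 oner_eq0.
have nX1 : ~ @Upsilon R[i] (1, 0).
  by rewrite /Upsilon /= dvdp1 size_polyX.
have nzU : nonzero_subm (@Upsilon R[i]).
  exists (0, 1); split; first by rewrite /Upsilon /= dvdp0.
  by move/(congr1 snd) => /= /eqP; rewrite oner_eq0.
have ssub : forall tt : R[i], tt != 0 -> simple_submod (Mact tt s 0) (@Upsilon R[i]).
  move=> tt tt0 W HW nz _ v uv; exact: (ups_in HW erefl tt0 s0 nz uv).
split; first split.
- move=> hsim; apply/negP => /eqP a0; subst alpha.
  by apply: nX1; apply: (hsim _ (ups_is_sub t s) nzU).
- by move=> a0 W HW nz; apply: (all_of_nonzero HW t0 s0 a0 nz).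
split.
- split; first exact: ups_is_sub.
  split; first exact: nzU.
  split; first by exists (1, 0).
  split.
    move=> W HW nz pr v; split; first exact: (W_sub_ups HW erefl t0 s0 nz pr).
    exact: (ups_in HW erefl t0 s0 nz).
  split; last by move=> b v _; exact: ups_img.
  exists (1, 0); split => // [[f g]]; exists f.[0].
  change ('X %| f - f.[0] *: 1); rewrite alg_polyC.
  exact: dvdX_sub0.
- split.
    apply: iso_gen => k hk; by rewrite negone_odd // opprK exp1rz.
  split.
    have := @iso_gen _ (-1) s; rewrite opprK; apply => k hk.
    by rewrite exp1rz negone_odd.
  split; apply: ssub; by rewrite ?oppr_eq0 oner_eq0.
Qed.
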